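(* In the line network model (see context), fix $t\ge1$ and view $R_t:=\rho_{\ell+1}(t)$ as a function $g(z_{1,1},\dots,z_{1,\ell},\dots,z_{t,1},\dots,z_{t,\ell})$ of the link states $z_{s,j}\in\{0,1\}$, $1\le s\le t$, $1\le j\le\ell$. Then $g$ is $1$-Lipschitz in each coordinate: changing the value of a single $z_{s,j}$ (all others fixed) changes the value of $g$ by at most $1$.
   Context: Line network model. Fix integers $\ell\ge1$, $n\ge1$. Given link states $z_{t,i}\in\{0,1\}$ ($1$ = link $i$ ON at step $t$), the rank $\rho_i(t)$ of node $N^{(i)}$ after $t$ steps satisfies $\rho_1(t)=n$, $\rho_i(0)=0$ for $2\le i\le\ell+1$, and $\rho_{i+1}(t)=\rho_{i+1}(t-1)+z_{t,i}\mathbf 1\{\rho_i(t-1)>\rho_{i+1}(t-1)\}$ for $t\ge1$, $1\le i\le\ell$. $R_t=\rho_{\ell+1}(t)$ is the number of innovative (linearly independent) packets received at the destination $N^{(\ell+1)}$ after $t$ steps. *)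

(* Defs.v *)
From mathcomp Require Import all_boot.
Set Implicit Arguments. Unset Strict Implicit. Unset Printing Implicit Defensive.

(* Link states: z t i = true iff link i (from node i to node i+1) is ON at
   step t (1-indexed: t >= 1, 1 <= i <= l).
   rank n z t i = rho_i(t), the rank of node N^(i) after t steps,
   for nodes 1 <= i <= l+1 (values at other indices are irrelevant). *)
Fixpoint rank (n : nat) (z : nat -> nat -> bool) (t : nat) (i : nat) : nat :=
  match t with
  | 0 => if i == 1 then n else 0
  | t'.+1 =>
      if i == 1 then n
      else rank n z t' i +
           (z t'.+1 i.-1 && (rank n z t' i.-1 > rank n z t' i))
  end.

Definition R (l n : nat) (z : nat -> nat -> bool) (t : nat) : nat :=
  rank n z t l.+1.

(* Main.v *)
Require Import Defs.
From Stdlib Require Import Lia.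
From mathcomp Require Import all_boot.

Lemma step_mono (a b a' b' : nat) (c1 c2 : bool) : a <= b -> a' <= b' -> (c1 ==> c2) ->
  a + (c1 && (a < a')) <= b + (c2 && (b < b')).
Proof.
move=> h1 h2 h3; case: c1 h3; case: c2 => //= _;
 case: (ltnP a a') => h4; case: (ltnP b b') => h5 /=;
 move: h1 h2 h4 h5 => /leP ? /leP ? /leP ? /leP ?; apply/leP; rewrite -?plusE; lia.
Qed.

Lemma step_sand (a b a' b' : nat) (c : bool) : a <= b -> b <= a.+1 -> a' <= b' -> b' <= a'.+1 ->
  b + (c && (b < b')) <= (a + (c && (a < a'))).+1.
Proof.
move=> h1 h2 h3 h4; case: c => /=;
 case: (ltnP a a') => h5; case: (ltnP b b') => h6 /=;
 move: h1 h2 h3 h4 h5 h6 => /leP ? /leP ? /leP ? /leP ? /leP ? /leP ?; apply/leP; rewrite -?plusE; lia.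
Qed.

Lemma step_same (a : nat) (c1 c2 x : bool) : a + (c2 && x) <= (a + (c1 && x)).+1.
Proof. case: c1; case: c2; case: x => /=; apply/leP; rewrite -?plusE; lia. Qed.

Lemma mono n z1 z2 (H : forall u i, z1 u i ==> z2 u i) u i :
  rank n z1 u i <= rank n z2 u i.
Proof.
elim: u i => [|u IH] i /=; first by [].
case: (i == 1) => //; apply: step_mono; [exact: IH | exact: IH | exact: H].
Qed.

Lemma eqbefore n z1 z2 s (He : forall u i, u != s -> z1 u i = z2 u i) u :
  u < s -> forall i, rank n z2 u i = rank n z1 u i.
Proof.
elim: u => [|u IH] hu i //=.
have hu' : u < s by apply: ltnW.
rewrite !IH // He //; apply/eqP => E; by rewrite E ltnn in hu.
Qed.

Lemma upper n z1 z2 s (H : forall u i, z1 u i ==> z2 u i)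
  (He : forall u i, u != s -> z1 u i = z2 u i) u i :
  rank n z2 u i <= (rank n z1 u i).+1.
Proof.
elim: u i => [|u IH] i /=; first by [].
case: (i == 1) => //.
case: (u.+1 =P s) => [Es|Ns].
- have hu : u < s by rewrite -Es.
  rewrite !(eqbefore n z1 z2 s He u hu); exact: step_same.
- rewrite He; last by apply/eqP.
  apply: step_sand; [exact: mono | exact: IH | exact: mono | exact: IH].
Qed.

Theorem mainTheorem6 (l n t : nat) (hl : 1 <= l) (hn : 1 <= n) (ht : 1 <= t)
  (z z' : nat -> nat -> bool) (s j : nat)
  (hs : 1 <= s <= t) (hj : 1 <= j <= l)
  (hzz' : forall u i, (u, i) != (s, j) -> z u i = z' u i) :
  R l n z t <= (R l n z' t).+1 /\ R l n z' t <= (R l n z t).+1.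
Proof.
pose zmin := fun u i => z u i && z' u i.
pose zmax := fun u i => z u i || z' u i.
have He : forall u i, u != s -> zmin u i = zmax u i.
  move=> u i Nu; rewrite /zmin /zmax hzz'; first by case: (z' u i).
  by rewrite xpair_eqE negb_and Nu.
have Hm : forall u i, zmin u i ==> zmax u i by move=> u i; rewrite /zmin /zmax; case: (z u i); case: (z' u i).
have Up := upper n zmin zmax s Hm He t l.+1.
have m1 : rank n zmin t l.+1 <= rank n z t l.+1.
  apply: mono => u i; rewrite /zmin; by case: (z u i); case: (z' u i).
have m2 : rank n zmin t l.+1 <= rank n z' t l.+1.
  apply: mono => u i; rewrite /zmin; by case: (z u i); case: (z' u i).
have m3 : rank n z t l.+1 <= rank n zmax t l.+1.
  apply: mono => u i; rewrite /zmax; by case: (z u i); case: (z' u i).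
have m4 : rank n z' t l.+1 <= rank n zmax t l.+1.
  apply: mono => u i; rewrite /zmax; by case: (z u i); case: (z' u i).
rewrite /R; move: Up m1 m2 m3 m4 => /leP ? /leP ? /leP ? /leP ? /leP ?.
split; apply/leP; rewrite -?plusE; lia.
Qed.
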